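(* Let $F$, $G$, $\Pi$ be as in the context. For every $G$-invariant ergodic probability measure $\mu$ on $\Sigma_A\times I$ we have $\chi^G(\mu)=\chi(\Pi_*\mu)$, where $\chi^G(\mu)=\int\log|g_{\omega_0}'(x)|\,d\mu(\omega,x)$ and $\chi(\nu)=\int\log|f_{\xi_0}'(p)|\,d\nu(\xi,p)$. In particular, if $\mu$ is hyperbolic with respect to $G$ (i.e. $\chi^G(\mu)\ne0$), then $\Pi_*\mu$ is hyperbolic with respect to $F$.
   Context: $I=[0,1]$, $R(x)=1-x$. $F(\xi,p)=(\sigma(\xi),f_{\xi_0}(p))$ on $\Sigma_N\times I$, $\Sigma_N=\{1,\ldots,N\}^{\mathbb Z}$, with $f_i$ $C^1$-diffeomorphisms onto their images. $\mathcal I_P$ / $\mathcal I_R$: indices of orientation preserving / reversing $f_i$. $A=(a_{ij})_{i,j=1}^{2N}$ with $a_{ij}=1$ if ($i\in\mathcal I_P$, $j\le N$), or ($i\in\mathcal I_R$, $j>N$), or ($i-N\in\mathcal I_P$, $j>N$), or ($i-N\in\mathcal I_R$, $j\le N$), else $0$; $\Sigma_A$ the $A$-admissible sequences in $\{1,\ldots,2N\}^{\mathbb Z}$ with shift $\sigma_A$; $\pi(\omega)_n=\overline{\omega_n}$ ($\overline i=i$ for $i\le N$, $\overline i=i-N$ otherwise). $G(\omega,x)=(\sigma_A(\omega),g_{\omega_0}(x))$ with $g_i=f_i$, $g_{i+N}=R\circ f_i\circ R$ ($i\in\mathcal I_P$), $g_i=R\circ f_i$, $g_{i+N}=f_i\circ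 R$ ($i\in\mathcal I_R$). $C=\{\omega\colon\omega_0\le N\}$; $\Pi(\omega,x)=(\pi(\omega),x)$ if $\omega\in C$, $(\pi(\omega),R(x))$ otherwise. A measure is hyperbolic if its fiber Lyapunov exponent is nonzero. *)

(* Defs.v *)
From HB Require Import structures.
From mathcomp Require Import all_boot all_order all_algebra.
From mathcomp Require Import all_classical all_reals all_analysis.
Set Implicit Arguments. Unset Strict Implicit. Unset Printing Implicit Defensive.
Import Order.TTheory GRing.Theory Num.Theory.
Import numFieldNormedType.Exports.
Local Open Scope classical_set_scope.
Local Open Scope ring_scope.

(* Symbols are natural numbers; the
   alphabets {1..N} and {1..2N} are imposed by the subsets [SigmaN] and
   [SigmaA] below. *)
Definition seqZ := (int -> nat).
Definition cylinders : set (set seqZ) :=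
  [set C | exists (n : int) (a : nat), C = [set w : seqZ | w n = a]].
Definition Seq := g_sigma_algebraType cylinders.

Definition Xsp (R : realType) := (Seq * R)%type.

Definition I01 {R : realType} : set R := [set x : R | 0 <= x <= 1].

Definition shift (w : Seq) : Seq := fun n => w (n + 1)%R.

Definition refl {R : realType} (x : R) : R := 1 - x.

Definition SigmaN (N : nat) : set Seq :=
  [set w | forall n, (1 <= w n <= N)%N].

Definition or_pres {R : realType} (h : R -> R) : Prop :=
  forall x, I01 x -> 0 < derive1 h x.
Definition or_rev {R : realType} (h : R -> R) : Prop :=
  forall x, I01 x -> derive1 h x < 0.

Definition inIP {R : realType} (N : nat) (f : nat -> R -> R) (i : nat) : Prop :=
  (1 <= i <= N)%N /\ or_pres (f i).
Definition inIR {R : realType} (N : nat) (f : nat -> R -> R) (i : nat) : Prop :=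
  (1 <= i <= N)%N /\ or_rev (f i).

Definition Aadj {R : realType} (N : nat) (f : nat -> R -> R) (i j : nat) : Prop :=
  (inIP N f i /\ (j <= N)%N) \/ (inIR N f i /\ (N < j)%N) \/
  (inIP N f (i - N) /\ (N < j)%N) \/ (inIR N f (i - N) /\ (j <= N)%N).

Definition SigmaA {R : realType} (N : nat) (f : nat -> R -> R) : set Seq :=
  [set w | forall n, (1 <= w n <= N + N)%N /\ Aadj N f (w n) (w (n + 1)%R)].

Definition bar (N i : nat) : nat := if (i <= N)%N then i else (i - N)%N.
Definition piA (N : nat) (w : Seq) : Seq := fun n => bar N (w n).

Definition gmap {R : realType} (N : nat) (f : nat -> R -> R) (i : nat) : R -> R :=
  if (i <= N)%N then
    (if `[< or_pres (f i) >] then f i else refl \o f i)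
  else
    (if `[< or_pres (f (i - N)%N) >] then refl \o f (i - N)%N \o refl
     else f (i - N)%N \o refl).

Definition Fmap {R : realType} (f : nat -> R -> R) (z : Xsp R) : Xsp R :=
  (shift z.1, f (z.1 0) z.2).
Definition Gmap {R : realType} (N : nat) (f : nat -> R -> R) (z : Xsp R) : Xsp R :=
  (shift z.1, gmap N f (z.1 0) z.2).

Definition Ccyl (N : nat) : set Seq := [set w | (w 0 <= N)%N].
Definition Pimap {R : realType} (N : nat) (z : Xsp R) : Xsp R :=
  if (z.1 0 <= N)%N then (piA N z.1, z.2) else (piA N z.1, refl z.2).

(* invariance and ergodicity of a measure concentrated on the invariant
   set S (S = Sigma_A x I for G, S = Sigma_N x I for F). *)
Definition invariant_on {R : realType} (S : set (Xsp R)) (T : Xsp R -> Xsp R)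
  (mu : set (Xsp R) -> \bar R) : Prop :=
  forall B, measurable B -> mu ((T @^-1` B) `&` S) = mu B.
Definition ergodic_on {R : realType} (S : set (Xsp R)) (T : Xsp R -> Xsp R)
  (mu : set (Xsp R) -> \bar R) : Prop :=
  forall B, measurable B -> (T @^-1` B) `&` S = B `&` S ->
    mu B = 0%E \/ mu B = 1%E.

Definition chiG {R : realType} (N : nat) (f : nat -> R -> R)
  (mu : set (Xsp R) -> \bar R) : \bar R :=
  \int[mu]_(z in SigmaA N f `*` I01)
     (ln `|derive1 (gmap N f (z.1 0)) z.2|)%:E.
Definition chiF {R : realType} (N : nat) (f : nat -> R -> R)
  (nu : set (Xsp R) -> \bar R) : \bar R :=
  \int[nu]_(z in SigmaN N `*` I01) (ln `|derive1 (f (z.1 0)) z.2|)%:E.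

(* Main.v *)
Require Import Defs.
From HB Require Import structures.
From mathcomp Require Import all_boot all_order all_algebra.
From mathcomp Require Import all_classical all_reals all_analysis.
From mathcomp Require Import measurable_realfun zify lra.
Import Order.TTheory GRing.Theory Num.Theory.
Import numFieldNormedType.Exports.
Local Open Scope classical_set_scope.
Local Open Scope ring_scope.
Lemma refl_isd {R : realType} (y : R) : is_derive y 1 (@refl R) (-1).
Proof.
have H := (@is_deriveB R R^o R^o (cst 1) id y 1 _ _ (is_derive_cst _ _ _) (is_derive_id _ _)).
have -> : @refl R = (cst 1 - id : R^o -> R^o) by apply/funext => x.
by apply: is_derive_eq H _; rewrite sub0r.
Qed.

Lemma refl_der {R : realType} (y : R) : derivable (@refl R) y 1 /\ derive1 (@refl R) y = -1.
Proof. have h := refl_isd y. by split; [exact: ex_derive | rewrite derive1E derive_val]. Qed.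

Lemma der_reflg {R : realType} (g : R -> R) x : derivable g x 1 ->
  derive1 (refl \o g) x = - derive1 g x.
Proof.
move=> dg; rewrite derive1_comp //.
by rewrite (refl_der _).2 mulN1r.
Qed.

Lemma der_grefl {R : realType} (g : R -> R) x : derivable g (refl x) 1 ->
  derive1 (g \o refl) x = - derive1 g (refl x).
Proof.
move=> dg; rewrite derive1_comp //.
by rewrite (refl_der _).2 mulrN1.
Qed.

Lemma cyl_meas (n : int) (a : nat) : measurable ([set w : Seq | w n = a]).
Proof. by apply: sub_sigma_algebra; exists n, a. Qed.

Lemma meas1 (P : nat -> Prop) (n : int) : measurable [set w : Seq | P (w n)].
Proof.
have -> : [set w : Seq | P (w n)] = \bigcup_(a in P) [set w : Seq | w n = a].
  by apply/seteqP; split => [w /= Pw|w [a Pa /= ->]] //; exists (w n).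
by apply: bigcup_measurable => a _; exact: cyl_meas.
Qed.

Lemma meas2 (Q : nat -> nat -> Prop) (n m : int) :
  measurable [set w : Seq | Q (w n) (w m)].
Proof.
have -> : [set w : Seq | Q (w n) (w m)] =
   \bigcup_(a in setT) ([set w : Seq | w n = a] `&` [set w : Seq | Q a (w m)]).
  apply/seteqP; split => [w /= Pw|w [a _ /= [<-]]] //.
  by exists (w n).
apply: bigcup_measurable => a _; apply: measurableI; [exact: cyl_meas|exact: meas1].
Qed.

Lemma measZ (S : int -> set Seq) : (forall n, measurable (S n)) ->
  measurable [set w | forall n, S n w].
Proof.
move=> mS.
have -> : [set w | forall n, S n w] =
  \bigcap_(k in setT) (S (Posz k) `&` S (Negz k)).
  apply/seteqP; split => [w /= H k _|w /= H [k|k]].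
    by split; apply: H.
  by case: (H k I).
  by case: (H k I).
by apply: bigcap_measurableType => k _; apply: measurableI.
Qed.

Lemma SigmaN_meas N : measurable (SigmaN N).
Proof. by apply: (measZ (fun n => [set w : Seq | (1 <= w n <= N)%N])) => n; exact: (meas1 (fun k => (1 <= k <= N)%N)). Qed.

Lemma SigmaA_meas (R : realType) N (f : nat -> R -> R) : measurable (SigmaA N f).
Proof.
apply: (measZ (fun n => [set w : Seq | (1 <= w n <= N + N)%N /\ Aadj N f (w n) (w (n + 1)%R)])) => n.
exact: (meas2 (fun a b => (1 <= a <= N + N)%N /\ Aadj N f a b)).
Qed.

Lemma I01_meas (R : realType) : measurable (@I01 R).
Proof.
have -> : @I01 R = `[0, 1]%classic.
  by apply/seteqP; split => x; rewrite /I01 /= in_itv.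
exact: measurable_itv.
Qed.

Lemma piA_meas N : measurable_fun setT (piA N).
Proof.
apply: (@measurability _ _ Seq Seq setT (piA N) cylinders) => //.
move=> _ [_ [n [a ->]] <-].
rewrite setTI.
exact: (meas1 (fun k => bar N k = a) n).
Qed.

Lemma measfst (R : realType) (P : nat -> Prop) n : measurable [set z : Xsp R | P (z.1 n)].
Proof.
have -> : [set z : Xsp R | P (z.1 n)] = [set w : Seq | P (w n)] `*` setT.
  by apply/seteqP; split => z /=; [move=> h; split|case].
apply: measurableX => //; exact: meas1.
Qed.

Lemma C_meas (R : realType) N : measurable [set z : Xsp R | (z.1 0 <= N)%N].
Proof.
have -> : [set z : Xsp R | (z.1 0 <= N)%N] = [set w : Seq | (w 0 <= N)%N] `*` setT.
  by apply/seteqP; split => z /=; [move=> h; split|case].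
apply: measurableX => //; exact: (meas1 (fun k => (k <= N)%N)).
Qed.

Lemma Pimap_meas (R : realType) N : measurable_fun setT (@Pimap R N).
Proof.
apply/measurable_fun_pairP; split.
  have -> : fst \o @Pimap R N = piA N \o fst.
    by apply/funext => z; rewrite /Pimap /=; case: ifP.
  by apply: measurableT_comp; [exact: piA_meas|exact: measurable_fst].
have -> : snd \o @Pimap R N = (fun z : Xsp R => if (z.1 0 <= N)%N then z.2 else refl z.2).
  by apply/funext => z; rewrite /Pimap /=; case: ifP.
apply: measurable_fun_if => //.
- move=> _ B _; rewrite setTI; exact: (measfst _ (fun k => B (k <= N)%N) 0).
- apply: measurable_funTS; exact: measurable_snd.
- apply: measurable_funTS; apply: measurableT_comp; last exact: measurable_snd.
  apply: continuous_measurable_fun => x.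
  by apply: cvgB; [exact: cvg_cst|exact: cvg_id].
Qed.

Lemma sel_meas (R : realType) (D : set (Xsp R)) (phi : nat -> R -> R) (K : set nat) :
  measurable D -> (forall z, D z -> K (z.1 0)) ->
  (forall k, K k -> measurable_fun setT (phi k)) ->
  measurable_fun D (fun z => phi (z.1 0) z.2).
Proof.
move=> mD DK mphi _ B mB.
have -> : D `&` (fun z => phi (z.1 0) z.2) @^-1` B =
    \bigcup_(k in K) (D `&` ([set w : Seq | w 0 = k] `*` (phi k @^-1` B))).
  apply/seteqP; split => [z [Dz Bz]|z [k Kk [Dz [/= e Bz]]]].
    by exists (z.1 0); [exact: DK|split].
  by split => //=; rewrite e.
apply: bigcup_measurable => k Kk; apply: measurableI => //; apply: measurableX.
  exact: cyl_meas.
by have := mphi k Kk measurableT B mB; rewrite setTI.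
Qed.

Lemma lnder_meas (R : realType) (g : R -> R) : continuous (derive1 g) ->
  measurable_fun setT (fun x => ln `|derive1 g x|).
Proof.
move=> cg.
apply: measurableT_comp; first exact: measurable_ln.
apply: measurableT_comp; first exact: normr_measurable.
exact: continuous_measurable_fun.
Qed.

Lemma derivable_reflg {R : realType} (g : R -> R) y : derivable g y 1 ->
  derivable (refl \o g) y 1.
Proof.
move=> /derivable1_diffP dg; apply/derivable1_diffP.
apply: differentiable_comp => //; apply/derivable1_diffP; exact: (refl_der _).1.
Qed.



Theorem corollary3p19 (R : realType) (N : nat) (f : nat -> R -> R)
  (hC1 : forall i, (1 <= i <= N)%N ->
           (forall x : R, derivable (f i) x 1) /\ continuous (derive1 (f i) : R -> R))
  (hinj : forall i, (1 <= i <= N)%N ->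
           forall x y, I01 x -> I01 y -> f i x = f i y -> x = y)
  (hder : forall i, (1 <= i <= N)%N -> forall x, I01 x -> derive1 (f i) x != 0)
  (himg : forall i, (1 <= i <= N)%N -> forall x, I01 x -> I01 (f i x))
  (mu : probability (Xsp R) R)
  (hsupp : mu (SigmaA N f `*` I01) = 1%E)
  (hinv : invariant_on (SigmaA N f `*` I01) (Gmap N f) mu)
  (herg : ergodic_on (SigmaA N f `*` I01) (Gmap N f) mu) :
  chiG N f mu = chiF N f (pushforward mu (Pimap N)) /\
  (chiG N f mu != 0%E -> chiF N f (pushforward mu (Pimap N)) != 0%E).
Proof.
pose DA := SigmaA N f `*` (@I01 R).
pose DN := SigmaN N `*` (@I01 R).
have mDA : measurable DA by apply: measurableX; [exact: SigmaA_meas|exact: I01_meas].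
have mDN : measurable DN by apply: measurableX; [exact: SigmaN_meas|exact: I01_meas].
have mPi := Pimap_meas R N.
pose E := Pimap N @^-1` DN.
have mE : measurable E by have := mPi measurableT DN mDN; rewrite setTI.
have DAE : DA `<=` E.
  move=> [w x] [/= Aw Ix]; rewrite /E /DN /Pimap /=.
  have Hb : forall n, (1 <= piA N w n <= N)%N.
    move=> n; case: (Aw n) => h _; rewrite /piA /bar; case: ifP => /= c; lia.
  case: ifP => _; split => //=.
  by move: Ix; rewrite /I01 /refl /= => /andP[h1 h2]; apply/andP; split; lra.
have mhF : measurable_fun DN (fun z : Xsp R => (ln `|derive1 (f (z.1 0)) z.2|)%:E).
  apply/measurable_EFinP.
  apply: (@sel_meas R DN (fun k x => ln `|derive1 (f k) x|) [set k | (1 <= k <= N)%N]) => //.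
    by move=> [w x] [/= Nw _]; exact: Nw.
  by move=> k /= hk; apply: lnder_meas; case: (hC1 k hk).
have hnull : mu (E `\` DA) = 0%E.
  apply: (@subset_measure0 _ _ _ mu (E `\` DA) (~` DA)).
  - exact: measurableD.
  - exact: measurableC.
  - by move=> z [].
  - have h := probability_setC mu mDA.
    apply: (etrans h); by rewrite hsupp subee.
have shrink : forall g : Xsp R -> \bar R, measurable_fun E g -> (forall x, E x -> (0 <= g x)%E) ->
    (\int[mu]_(x in E) g x = \int[mu]_(x in DA) g x)%E.
  move=> g mg g0; rewrite (ge0_negligible_integral _ _ _ _ hnull) //; last exact: measurableD.
  by rewrite setDD setIidr.
have key : forall z, DA z ->
    (ln `|derive1 (f ((Pimap N z).1 0)) (Pimap N z).2|)%:E =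
    (ln `|derive1 (gmap N f (z.1 0)) z.2|)%:E.
  move=> [w x] [/= Aw Ix].
  have [h1 _] := Aw 0%Z.
  rewrite /Pimap /=; case: ifP => hle /=.
  - rewrite /piA /bar hle /gmap hle.
    have hi : (1 <= w 0 <= N)%N by lia.
    have [dv _] := hC1 _ hi.
    case: asboolP => _ //.
    by rewrite der_reflg // normrN.
  - rewrite /piA /bar hle /gmap hle.
    have hj : (1 <= w 0 - N <= N)%N by move: (negbT hle) h1; lia.
    have [dv _] := hC1 _ hj.
    case: asboolP => _.
    + rewrite der_grefl; last exact: derivable_reflg.
      by rewrite normrN der_reflg // normrN.
    + by rewrite der_grefl // normrN.
have eq : chiF N f (pushforward mu (Pimap N)) = chiG N f mu.
  rewrite /chiF /chiG integralE [RHS]integralE.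
  rewrite !ge0_integral_pushforward //; last 2 first.
  - by [exact: measurable_funepos mhF|exact: measurable_funeneg mhF].
  - by [exact: measurable_funepos mhF|exact: measurable_funeneg mhF].
  have sub : Pimap N @` E `<=` DN by move=> _ [z Ez <-].
  rewrite !shrink; last 4 first.
  - exact: (measurable_comp mDN sub (measurable_funeneg mhF) (measurable_funTS mPi)).
  - by move=> x _ /=; exact: funeneg_ge0.
  - exact: (measurable_comp mDN sub (measurable_funepos mhF) (measurable_funTS mPi)).
  - by move=> x _ /=; exact: funepos_ge0.
  congr (_ - _)%E; apply: eq_integral => z /[!inE] Dz.
  + by rewrite /= !funeposE key.
  + by rewrite /= !funenegE key.
by split; [rewrite eq | rewrite eq].
Qed.
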